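(* Let $H=(W,F)$ be a graph, $xy$ a flat edge of $H$, and $B=(X,Y;E_{XY})$ a cobipartite graph disjoint from $H$ with $E_{XY}\neq\varnothing$. Let $G$ be the graph obtained by the augmentation of the edge $xy$ in $H$ using $B$, and let $D=(V,A)$ be a clique-acyclic orientation of $G$. Let $s_X,s_Y$ be the sinks of $D[X]$ and $D[Y]$ respectively, labelled so that $(s_X,s_Y)\notin A$. Let $U=Y\setminus N_G(s_X)$, let $S_U=\varnothing$ if $U=\varnothing$ and $S_U=\{s_U\}$ where $s_U$ is the sink of $D[U]$ otherwise, and let $Z=(V\setminus(X\cup Y))\cup\{s_X,s_Y\}\cup S_U$. Then every kernel of $D[Z]$ is a kernel of $D$.
   Context: An edge of an undirected graph is flat if it is contained in no triangle. A cobipartite graph $B=(X,Y;E_{XY})$ has vertex set partitioned into two cliques $X$ and $Y$, with $E_{XY}$ the set of edges between $X$ and $Y$. The augmentation of a flat edge $xy$ in $H$ using $B$ builds a graph from $H$ and $B$ by removing $x$, $y$ (and the edge $xy$) from $H$, and adding all edges between $X$ and $N_H(x)\setminus\{y\}$ and all edges between $Y$ and $N_H(y)\setminus\{x\}$. An orientation orients each edge in exactly one direction; it is clique-acyclic if every clique has a sink, i.e. a vertex receiving an arc from every other vertex of the clique. For a digraph $D=(V,A)$, a set $S$ is stable if no two vertices of $S$ are adjacent, absorbing if every $u\in V\setminus S$ has some $v\in S$ with $(u,v)\in A$; a kernel is a stable absorbing set. *)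

(* Defs.v *)
From mathcomp Require Import all_boot.
Set Implicit Arguments. Unset Strict Implicit. Unset Printing Implicit Defensive.

Definition simple_graph (T : finType) (e : rel T) : Prop :=
  (forall u v, e u v = e v u) /\ (forall u, ~~ e u u).

Definition is_clique (T : finType) (e : rel T) (K : {set T}) : Prop :=
  forall u v, u \in K -> v \in K -> u != v -> e u v.

Definition flat_edge (W : finType) (e : rel W) (x y : W) : Prop :=
  e x y /\ forall z, ~~ (e x z && e y z).

Notation aug_vert W VB x y := ({w : W | (w != x) && (w != y)} + VB)%type.

(* Adjacency of the augmentation of the flat edge xy of H=(W,e) using the
   cobipartite graph B = (X, ~:X ; eB). *)
Definition aug_adj (W VB : finType) (e : rel W) (x y : W) (X : {set VB})
  (eB : rel VB) : rel (aug_vert W VB x y) :=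
  fun u v =>
    match u, v with
    | inl a, inl b => e (val a) (val b)
    | inr a, inr b => eB a b
    | inl a, inr b => if b \in X then e (val a) x else e (val a) y
    | inr a, inl b => if a \in X then e x (val b) else e y (val b)
    end.

Definition orientation (T : finType) (g : rel T) (A : rel T) : Prop :=
  (forall u v, g u v = (A u v || A v u)) /\ (forall u v, ~~ (A u v && A v u)).

Definition is_sink (T : finType) (A : rel T) (K : {set T}) (s : T) : Prop :=
  s \in K /\ forall u, u \in K -> u != s -> A u s.

Definition clique_acyclic (T : finType) (g : rel T) (A : rel T) : Prop :=
  forall K : {set T}, K != set0 -> is_clique g K -> exists s, is_sink A K s.

Definition kernel_of_induced (T : finType) (A : rel T) (S K : {set T}) : Prop :=
  K \subset S /\
  (forall u v, u \in K -> v \in K -> ~~ A u v) /\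
  (forall u, u \in S -> u \notin K -> exists2 v, v \in K & A u v).

Definition kernel (T : finType) (A : rel T) (K : {set T}) : Prop :=
  kernel_of_induced A [set: T] K.

Arguments aug_adj {W VB} e x y X eB.

(* Main.v *)
Require Import Defs.
From mathcomp Require Import all_boot.

Lemma tri (T : finType) (g A : rel T) a b c :
  orientation g A -> clique_acyclic g A -> A a b -> A b c -> g a c -> a != c -> A a c.
Proof.
move=> [Hg Hn] Hca Hab Hbc Hac Hneq.
have Hsym : forall u v, g u v = g v u by move=> u v; rewrite !Hg orbC.
have gab : g a b by rewrite Hg Hab.
have gbc : g b c by rewrite Hg Hbc.
have [s [Hs Hsink]] : exists s, is_sink A [set a; b; c] s.
  apply: Hca; first by apply/set0Pn; exists a; rewrite !inE eqxx.
  move=> u v; rewrite !inE -!orbA => /or3P[/eqP->|/eqP->|/eqP->] /or3P[/eqP->|/eqP->|/eqP->]; rewrite ?eqxx //;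
  by rewrite ?gab ?gbc ?Hac // Hsym ?gab ?gbc ?Hac.
move: Hs; rewrite !inE -!orbA => /or3P[/eqP Es|/eqP Es|/eqP Es]; subst s.
- have Hba := Hsink b; rewrite !inE eqxx orbT in Hba.
  have nab : b != a by apply/eqP=> E; subst; move: (Hn a a); rewrite Hab.
  by move: (Hn a b); rewrite Hab (Hba isT nab).
- have Hcb := Hsink c; rewrite !inE eqxx !orbT in Hcb.
  have nbc : c != b by apply/eqP=> E; subst; move: (Hn b b); rewrite Hbc.
  by move: (Hn b c); rewrite Hbc (Hcb isT nbc).
- by apply: Hsink; rewrite ?inE ?eqxx.
Qed.

Theorem lemma3 (W VB : finType) (e : rel W) (x y : W)
  (X : {set VB}) (eB : rel VB)
  (A : rel (aug_vert W VB x y))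
  (sX sY : VB) (SU : {set aug_vert W VB x y}) :
  simple_graph e ->
  flat_edge e x y ->
  simple_graph eB ->
  is_clique eB X -> is_clique eB (~: X) ->
  (exists a b, [/\ a \in X, b \in ~: X & eB a b]) ->
  orientation (aug_adj e x y X eB) A ->
  clique_acyclic (aug_adj e x y X eB) A ->
  is_sink A [set inr u | u in X] (inr sX) ->
  is_sink A [set inr u | u in ~: X] (inr sY) ->
  ~~ A (inr sX) (inr sY) ->
  let U := [set inr u | u in ~: X &
              ~~ aug_adj e x y X eB (inr sX) (inr u)] in
  (U = set0 /\ SU = set0) \/ (exists sU, is_sink A U sU /\ SU = [set sU]) ->
  let Z := [set v | if v is inl _ then true else false]
             :|: [set inr sX; inr sY] :|: SU in
  forall K, kernel_of_induced A Z K -> kernel A K.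
Proof.
move=> He Hflat HeB HX HY Hex Hor Hca [sXin sXs] [sYin sYs] nAXY U HU Z K [KZ [Kst Kabs]].
split; first exact: subsetT.
split; first exact: Kst.
move=> u _ uK.
case: (boolP (u \in Z)) => uZ; first exact: Kabs.
set g := aug_adj e x y X eB.
have [Hg Hn] := Hor.
have Hsym : forall u v, g u v = g v u by move=> u' v'; rewrite /g !Hg orbC.
have Ag : forall u v, A u v -> g u v by move=> u' v' H; rewrite /g Hg H.
have Airr : forall u, ~~ A u u by move=> u'; apply/negP=> H; move: (Hn u' u'); rewrite H.
have sXX : sX \in X by rewrite (mem_imset _ _ inr_inj) in sXin.
have sYX : sX \notin ~: X by rewrite inE negbK.
have sYnX : sY \in ~: X by rewrite (mem_imset _ _ inr_inj) in sYin.
have inlZ : forall w, inl w \in Z by move=> w; rewrite !inE.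
have sXZ : inr sX \in Z by rewrite !inE eqxx ?orbT.
have sYZ : inr sY \in Z by rewrite !inE eqxx ?orbT.
have inZr : forall c, inr c \in Z -> [\/ c = sX, c = sY | inr c \in SU].
  move=> c; rewrite !inE /= => /orP[/orP[]|]; last by move=> ?; apply: Or33.
  by move/eqP=> [->]; apply: Or31.
  by move/eqP=> [->]; apply: Or32.
have inU : forall v, v \in U -> exists2 c, v = inr c & (c \notin X) && ~~ g (inr sX) (inr c).
  move=> v /imsetP[c]; rewrite !inE => /andP[c1 c2] ->; exists c => //; by rewrite c1.
have SUU : forall v, v \in SU -> v \in U.
  move=> v; case: HU => [[_ ->]|[sU [[sUU _] ->]]]; first by rewrite inE.
  by rewrite inE => /eqP->.
case: u uZ uK => [w|b] uZ uK; first by rewrite inlZ in uZ.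
have bsX : b != sX by apply/eqP=> E; subst; rewrite sXZ in uZ.
have bsY : b != sY by apply/eqP=> E; subst; rewrite sYZ in uZ.
have bSU : inr b \notin SU by apply/negP=> H; rewrite !inE H !orbT in uZ.
have neqK : forall v, v \in K -> inr b != v by move=> v vK; apply/eqP=> E; subst; rewrite vK in uK.
case: (boolP (b \in X)) => bX.
  have Hu : A (inr b) (inr sX).
    apply: sXs; first by rewrite (mem_imset _ _ inr_inj).
    by apply/eqP=> [[]]; apply/eqP.
  case sXK: (inr sX \in K); first by exists (inr sX).
  have [v vK Av] := Kabs (inr sX) sXZ (negbT sXK).
  exists v => //; have := @tri _ _ _ _ _ _ Hor Hca Hu Av; apply; last exact: neqK.
  have gv := Ag _ _ Av; have vZ := subsetP KZ _ vK.
  case: v {vK} Av gv vZ => [w|c] Av gv vZ; first by move: gv; rewrite /g /= sXX bX.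
  case: (inZr c vZ) Av gv => [->|->|cSU] Av gv.
  - by move: (Airr (inr sX)); rewrite Av.
  - by move: nAXY; rewrite Av.
  - have [c' [E] /andP[_ H]] := inU _ (SUU _ cSU); subst c'.
    by rewrite gv in H.
have bY : b \in ~: X by rewrite inE.
have sYX' : sY \notin X by rewrite inE in sYnX.
have adjY : forall c, c \notin X -> b != c -> g (inr b) (inr c).
  move=> c cX bc; rewrite /g /=; apply: HY; rewrite ?inE //.

have adjL : forall c w, c \notin X -> g (inr c) (inl w) -> g (inr b) (inl w).
  by move=> c w cX; rewrite /g /= (negbTE cX) (negbTE bX).
have notX : forall c, inr c \in Z -> c \in X -> c = sX.
  move=> c cZ cX; case: (inZr c cZ) => [//|E|cSU]; first by subst; rewrite cX in sYX'.
  by have [c' [E] /andP[H _]] := inU _ (SUU _ cSU); subst c'; rewrite cX in H.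
have Hu : A (inr b) (inr sY).
  apply: sYs; first by rewrite (mem_imset _ _ inr_inj).
  by apply/eqP=> [[]]; apply/eqP.
case sYK: (inr sY \in K); first by exists (inr sY).
have [v vK Av] := Kabs (inr sY) sYZ (negbT sYK).
have gv := Ag _ _ Av; have vZ := subsetP KZ _ vK.
have bv := neqK _ vK.
case: v vK Av gv vZ bv => [w|c] vK Av gv vZ bv.
  exists (inl w) => //; have := @tri _ _ _ _ _ _ Hor Hca Hu Av; apply => //.
  exact: adjL gv.
case cX: (c \in X); last first.
  exists (inr c) => //; have := @tri _ _ _ _ _ _ Hor Hca Hu Av; apply => //.
  by apply: adjY; rewrite ?cX //; apply: contra bv => /eqP ->.
have Ec := notX c vZ cX; subst c.
case gbX: (g (inr b) (inr sX)).
  exists (inr sX) => //; have := @tri _ _ _ _ _ _ Hor Hca Hu Av; apply => //.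
have bU : inr b \in U.
  rewrite /U; apply/imsetP; exists b => //; rewrite inE bY /=.
  by have := Hsym (inr sX) (inr b); rewrite gbX /g /= => ->.
case: HU => [[HU0 _]|[sU [[sUU sUs] SUeq]]]; first by rewrite HU0 inE in bU.
have bsU : inr b != sU by apply: contra bSU; rewrite SUeq inE.
have Hu2 := sUs _ bU bsU.
case sUK: (sU \in K); first by exists sU.
have sUZ : sU \in Z by rewrite !inE SUeq inE eqxx ?orbT.
have [v' v'K Av'] := Kabs sU sUZ (negbT sUK).
have [c' Ec' /andP[c'X ngc']] := inU _ sUU; subst sU.
exists v' => //; have := @tri _ _ _ _ _ _ Hor Hca Hu2 Av'; apply; last exact: neqK.
have gv' := Ag _ _ Av'; have v'Z := subsetP KZ _ v'K.
case: v' v'K Av' gv' v'Z => [w|d] v'K Av' gv' v'Z; first exact: adjL gv'.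
case dX: (d \in X); last first. apply: adjY; rewrite ?dX //; apply: contra (neqK _ v'K) => /eqP ->. done.
have Ed := notX d v'Z dX; subst d.
by rewrite Hsym gv' in ngc'.
Qed.
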